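(* Let $\Gamma\subset\mathbb{C}^*$ be a subgroup with the accumulation property, i.e. either $\Gamma$ contains an element $q$ with $|q|\ne1$, or $\Gamma$ contains a sequence $\gamma_n\to1$ in $\mathbb{C}^*$ with $\gamma_n\neq1$. If $R\in\mathbb{C}(z)$ and a homomorphism $\sigma:\Gamma\to\Gamma$ satisfy $R(\gamma z)=\sigma(\gamma)R(z)$ for all $\gamma\in\Gamma$, $z\in\mathbb{C}^*$, then $R(z)=cz^n$ for some $c\in\mathbb{C}^*$ and $n\in\mathbb{Z}$. *)

(* Defs.v *)
From HB Require Import structures.
From mathcomp Require Import all_boot all_order all_algebra.
From mathcomp Require Import complex.
From mathcomp Require Import reals.
Set Implicit Arguments. Unset Strict Implicit. Unset Printing Implicit Defensive.
Import Order.TTheory GRing.Theory Num.Theory.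
Local Open Scope ring_scope.

Definition is_subgroup_Cstar (F : fieldType) (G : F -> Prop) : Prop :=
  (forall g, G g -> g != 0) /\ G 1 /\
  (forall a b, G a -> G b -> G (a * b)) /\
  (forall a, G a -> G a^-1).

Definition is_group_hom_on (F : fieldType) (G : F -> Prop) (sigma : F -> F) : Prop :=
  (forall g, G g -> G (sigma g)) /\
  (forall a b, G a -> G b -> sigma (a * b) = sigma a * sigma b).

Definition accumulation_property (F : numFieldType) (G : F -> Prop) : Prop :=
  (exists q, G q /\ `|q| != 1) \/
  (exists g : nat -> F, (forall n, G (g n) /\ g n != 1) /\
     forall eps : F, 0 < eps -> exists N : nat, forall n, (N <= n)%N -> `|g n - 1| < eps).

(* Main.v *)
Require Import Defs.
From HB Require Import structures.
From mathcomp Require Import all_boot all_order all_algebra.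
From mathcomp Require Import complex.
From mathcomp Require Import reals.
From mathcomp Require Import ring zify.
Import Order.TTheory GRing.Theory Num.Theory.
Local Open Scope ring_scope.

Section Helpers.
Context {F : numFieldType}.

Lemma Sg_coef (g : F) (u : {poly F}) k : (u \Po (g *: 'X))`_k = g ^+ k * u`_k.
Proof.
rewrite comp_polyE.
have -> : \sum_(i < size u) u`_i *: (g *: 'X) ^+ i = \poly_(i < size u) (g ^+ i * u`_i).
  by rewrite poly_def; apply: eq_bigr => i _; rewrite exprZn scalerA mulrC.
rewrite coef_poly; case: ltnP => // H; by rewrite nth_default // mulr0.
Qed.

Lemma Sg_horner (g : F) (u : {poly F}) z : (u \Po (g *: 'X)).[z] = u.[g * z].
Proof. by rewrite horner_comp hornerZ hornerX. Qed.

Lemma Sg_neq0 (g : F) (u : {poly F}) : g != 0 -> u != 0 -> u \Po (g *: 'X) != 0.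
Proof.
move=> gn0 un0; apply: contra un0 => /eqP H; apply/eqP/polyP => k.
have := Sg_coef g u k; rewrite H coef0 => /esym /eqP.
by rewrite mulf_eq0 expf_eq0 (negbTE gn0) andbF /= => /eqP.
Qed.

Lemma low_coefM (u v : {poly F}) i j :
  (forall k, (k < i)%N -> u`_k = 0) -> (forall k, (k < j)%N -> v`_k = 0) ->
  (u * v)`_(i + j) = u`_i * v`_j.
Proof.
move=> Hu Hv; rewrite coefM.
have hi : (i < (i + j).+1)%N by rewrite ltnS leq_addr.
rewrite (bigD1 (Ordinal hi)) //= big1 ?addr0 ?addKn //.
move=> k /eqP kn; have kn' : (k : nat) != i by apply/eqP => E; apply: kn; apply: val_inj.
case: (ltngtP k i) kn' => // H _; first by rewrite Hu ?mul0r.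
by rewrite Hv ?mulr0 //; rewrite ltn_subLR ?ltn_add2r // -ltnS.
Qed.

Lemma low_index (u : {poly F}) : u != 0 ->
  exists i, u`_i != 0 /\ forall k, (k < i)%N -> u`_k = 0.
Proof.
move=> un0.
have ex : exists i, u`_i != 0 by exists (size u).-1; rewrite -lead_coefE lead_coef_eq0.
case: (ex_minnP ex) => i Hi Hmin; exists i; split => // k lt.
by apply/eqP; apply: contraTT lt => /Hmin; rewrite -leqNgt.
Qed.

Lemma poly_zero_cof (D P0 : {poly F}) : P0 != 0 ->
  (forall z, P0.[z] != 0 -> D.[z] = 0) -> D = 0.
Proof.
move=> P0n0 H; apply/eqP; apply: contraT => Dn0.
have Mn0 : D * P0 != 0 by rewrite mulf_neq0.
set rs := map (fun n : nat => n%:R : F) (iota 0 (size (D * P0))).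
have : (size rs < size (D * P0)%R)%N.
  apply: (max_poly_roots Mn0).
    apply/allP => x _; rewrite rootE hornerM.
    case: (eqVneq P0.[x] 0) => [->|/H ->]; by rewrite ?mulr0 ?mul0r.
  rewrite map_inj_uniq ?iota_uniq // => m n /eqP; rewrite eqr_nat => /eqP.
  done.
by rewrite size_map size_iota ltnn.
Qed.

Lemma acc_nonroot (G : F -> Prop) t : accumulation_property G -> (0 < t)%N ->
  exists g, G g /\ g ^+ t != 1.
Proof.
move=> [[q [Gq nq]] | [gs [Hgs cv]]] t0.
  exists q; split => //; apply: contra nq => /eqP E.
  by rewrite -(pexpr_eq1 t0) ?normr_ge0 // -normrX E normr1.
have ep : 0 < (t%:R : F)^-1 by rewrite invr_gt0 ltr0n.
have [N HN] := cv _ ep.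
have lt := HN N (leqnn N).
have [Gg gn1] := Hgs N.
set g := gs N in lt gn1 Gg *.
exists g; split => //; apply/negP => /eqP gt1.
have ng : `|g| = 1.
  by apply/eqP; rewrite -(pexpr_eq1 t0) ?normr_ge0 // -normrX gt1 normr1.
have hk : forall k, `|g ^+ k - 1| <= k%:R * `|g - 1|.
  elim => [|k IH]; first by rewrite expr0 subrr normr0 mul0r.
  have -> : g ^+ k.+1 - 1 = g * (g ^+ k - 1) + (g - 1) by rewrite exprS; ring.
  apply: le_trans (ler_normD _ _) _.
  by rewrite normrM ng mul1r -natr1 mulrDl mul1r lerD.
have S0 : \sum_(i < t) g ^+ i = 0.
  have := subrX1 g t; rewrite gt1 subrr => /esym /eqP.
  by rewrite mulf_eq0 subr_eq0 (negbTE gn1) /= => /eqP.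
have E : (t%:R : F) = \sum_(i < t) (1 - g ^+ i).
  by rewrite sumrB S0 subr0 sumr_const card_ord.
have : `|(t%:R : F)| <= (t%:R : F) * ((t%:R : F) * `|g - 1|).
  rewrite {1}E; apply: le_trans (ler_norm_sum _ _ _) _.
  have -> : (t%:R : F) * ((t%:R : F) * `|g - 1|) = \sum_(i < t) ((t%:R : F) * `|g - 1|).
    by rewrite sumr_const card_ord mulr_natl.
  apply: ler_sum => i _.
  rewrite distrC; apply: le_trans (hk i) _.
  by rewrite ler_wpM2r ?normr_ge0 // ler_nat ltnW.
rewrite normr_nat => H.
have : (t%:R : F) * ((t%:R : F) * `|g - 1|) < t%:R.
  rewrite -[X in _ < X]mulr1 ltr_pM2l ?ltr0n //.
  have tn0 : (t%:R : F) != 0 by rewrite pnatr_eq0 -lt0n.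
  apply: (lt_le_trans (y := (t%:R : F) * (t%:R)^-1)).
    by rewrite ltr_pM2l ?ltr0n.
  by rewrite mulfV.
by move=> H2; move: (le_lt_trans H H2); rewrite ltxx.
Qed.

End Helpers.

Local Open Scope complex_scope.

Theorem mainTheorem8 (R : realType) (G : R[i] -> Prop) (sigma : R[i] -> R[i])
    (p q : {poly R[i]}) :
  is_subgroup_Cstar G -> accumulation_property G -> is_group_hom_on G sigma ->
  q != 0 -> p != 0 ->
  (forall g z, G g -> z != 0 -> q.[z] != 0 -> q.[g * z] != 0 ->
     p.[g * z] / q.[g * z] = sigma g * (p.[z] / q.[z])) ->
  exists (c : R[i]) (n : int), c != 0 /\
    forall z, z != 0 -> q.[z] != 0 -> p.[z] / q.[z] = c * z ^ n.
Proof.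
move=> [Gne0 [G1 [GM GV]]] acc [Gs Ghom] qn0 pn0 H.
have [i0 [an0 alow]] := low_index p pn0.
have [j0 [bn0 blow]] := low_index q qn0.
set a := p`_i0 in an0; set b := q`_j0 in bn0.
have Step1 : forall g, G g ->
    (p \Po (g *: 'X)) * q = (sigma g)%:P * p * (q \Po (g *: 'X)).
  move=> g Gg; apply/eqP; rewrite -subr_eq0; apply/eqP.
  have gn0 := Gne0 _ Gg.
  apply: (@poly_zero_cof _ _ ('X * q * (q \Po (g *: 'X)))).
    by rewrite !mulf_neq0 ?polyX_eq0 ?Sg_neq0.
  move=> z; rewrite !hornerM hornerX !mulf_eq0 !negb_or => /andP[/andP[zn0 qz] qgz].
  rewrite Sg_horner in qgz.
  rewrite hornerD hornerN !hornerM hornerC !Sg_horner.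
  have E := H g z Gg zn0 qz qgz.
  rewrite -[p.[g * z]](divfK qgz) E; field.
  by rewrite qz.
have Step2 : forall g, G g -> sigma g * g ^+ j0 = g ^+ i0.
  move=> g Gg; have gn0 := Gne0 _ Gg.
  have := congr1 (fun u : {poly R[i]} => u`_(i0 + j0)) (Step1 g Gg) => /=.
  rewrite (@low_coefM _ _ _ i0 j0); last 2 first.
  - by move=> k lk; rewrite Sg_coef alow ?mulr0.
  - exact: blow.
  rewrite (@low_coefM _ _ _ i0 j0); last 2 first.
  - by move=> k lk; rewrite coefCM alow ?mulr0.
  - by move=> k lk; rewrite Sg_coef blow ?mulr0.
  rewrite !Sg_coef coefCM -/a -/b => E.
  have abn0 : a * b != 0 by rewrite mulf_neq0.
  apply: (mulIf abn0).
  have -> : sigma g * g ^+ j0 * (a * b) = sigma g * a * (g ^+ j0 * b) by ring.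
  by rewrite -E; ring.
have Step3 : b *: ('X^j0 * p) - a *: ('X^i0 * q) = 0.
  set E := b *: ('X^j0 * p) - a *: ('X^i0 * q).
  apply/eqP; apply: contraT => En0.
  have [m [em elow]] := low_index E En0.
  have Elo : forall k, (k <= i0 + j0)%N -> E`_k = 0.
    move=> k lk; rewrite /E coefB !coefZ !coefXnM.
    case: (ltnP k j0) => h1; case: (ltnP k i0) => h2; rewrite ?mulr0 ?subr0 ?sub0r.
    - by [].
    - by rewrite blow ?mulr0 ?oppr0 // ltn_subLR //; lia.
    - by rewrite alow ?mulr0 // ltn_subLR //; lia.
    - case: (ltngtP k (i0 + j0)) lk => // [lt|eq] _.
        rewrite alow ?blow ?mulr0 ?subrr //; rewrite ltn_subLR //; lia.
      by rewrite eq addnK addKn -/a -/b mulrC subrr.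
  have mgt : (i0 + j0 < m)%N.
    by rewrite ltnNge; apply: contra em => /Elo ->.
  have t0 : (0 < m - (i0 + j0))%N by rewrite subn_gt0.
  have [g [Gg gt]] := acc_nonroot G (m - (i0 + j0)) acc t0.
  have gn0 := Gne0 _ Gg.
  have Id : (E \Po (g *: 'X)) * q = (g ^+ i0)%:P * E * (q \Po (g *: 'X)).
    rewrite /E comp_polyB !comp_polyZ !comp_polyM !comp_Xn_poly !exprZn.
    have S1 := Step1 g Gg.
    set Sp := p \Po (g *: 'X) in S1 *; set Sq := q \Po (g *: 'X) in S1 *.
    rewrite -!mul_polyC.
    have -> : (b%:P * ((g ^+ j0)%:P * 'X^j0 * Sp) -
                 a%:P * ((g ^+ i0)%:P * 'X^i0 * Sq)) * q =
              b%:P * (g ^+ j0)%:P * 'X^j0 * (Sp * q) -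
                 a%:P * (g ^+ i0)%:P * 'X^i0 * Sq * q by ring.
    rewrite S1 -(Step2 g Gg) polyCM; ring.
  have := congr1 (fun u : {poly R[i]} => u`_(m + j0)) Id => /=.
  rewrite (@low_coefM _ _ _ m j0); last 2 first.
  - by move=> k lk; rewrite Sg_coef elow ?mulr0.
  - exact: blow.
  rewrite (@low_coefM _ _ _ m j0); last 2 first.
  - by move=> k lk; rewrite coefCM elow ?mulr0.
  - by move=> k lk; rewrite Sg_coef blow ?mulr0.
  rewrite !Sg_coef coefCM -/b => Eq.
  have ebn0 : E`_m * b != 0 by rewrite mulf_neq0.
  have : g ^+ m = g ^+ (i0 + j0).
    apply: (mulIf ebn0); rewrite exprD.
    have -> : g ^+ i0 * g ^+ j0 * (E`_m * b) = g ^+ i0 * E`_m * (g ^+ j0 * b) by ring.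
    by rewrite -Eq; ring.
  rewrite -(subnKC (ltnW mgt)) exprD => /eqP.
  rewrite -[X in _ == X]mulr1 (inj_eq (mulfI _)) ?expf_neq0 //.
  by rewrite (negbTE gt).
exists (a / b), (Posz i0 - Posz j0); split.
  by rewrite mulf_neq0 ?invr_eq0.
move=> z zn0 qz.
have := congr1 (fun u : {poly R[i]} => u.[z]) Step3 => /=.
rewrite hornerD hornerN !hornerZ !hornerM !hornerXn horner0 => /eqP.
rewrite subr_eq0 => /eqP Ez.
rewrite expfzDr // -invr_expz /=.
have zj : z ^+ j0 != 0 by rewrite expf_neq0.
have hp : p.[z] = a * z ^+ i0 * q.[z] / (b * z ^+ j0).
  apply: (mulIf (mulf_neq0 bn0 zj)); rewrite divfK ?mulf_neq0 //.
  by rewrite -mulrA -Ez; ring.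
rewrite hp -!exprnP; field.
by rewrite bn0 zj qz.
Qed.
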